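(* Suppose the strict partition $\lambda$ is shifted-balanced of Type (1) or Type (2). Then there exist integers $r_{ij}$, $[i,j]\in P^{\mathrm{shift}}_\lambda$, such that: (a) for every box $[i,j]\in P^{\mathrm{shift}}_\lambda$ with $i\ne j$: $\sum_{[i',j]\in P^{\mathrm{shift}}_\lambda}r_{i',j}=2$ and $\sum_{[i,j']\in P^{\mathrm{shift}}_\lambda}r_{i,j'}=2$; (b) for every box $[i,i]\in P^{\mathrm{shift}}_\lambda$: $\sum_{i'\le i,\ j'\le i}r_{i',j'}+\sum_{i'\ge i,\ j'\ge i}r_{i',j'}=4$ (sums over boxes $[i',j']\in P^{\mathrm{shift}}_\lambda$); (c) for every outward corner $c\in C^{\mathrm{shift}}(\lambda)$: $\sum_{[i,j]\in P^{\mathrm{shift}}_\lambda,\ c\in C^{\mathrm{shift}}_{ij}(\lambda)}r_{ij}=0$.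
   Context: $\delta_n=(n,n-1,\ldots,1)$, $b^a=(b,\ldots,b)$ ($a$ parts), partition sums are componentwise. A partition $\nu$ is balanced as a straight shape with height and width $k$ if $\ell(\nu)=\nu_1=k$ (or $\nu=\varnothing$ when $k=0$) and for every $1\le i\le k-1$ with $\nu_i>\nu_{i+1}$, $i+\nu_{i+1}=k$. A strict partition $\lambda$ is shifted-balanced of Type (1) if $\lambda=\delta_n+\nu$ and of Type (2) if $\lambda=\delta_n+\nu+(n-1-k)^n$, for some $0\le k<n$ and $\nu$ balanced with height and width $k$. $P^{\mathrm{shift}}_\lambda$ is the set of boxes $[i,j]$ with $1\le i\le\ell(\lambda)$, $i\le j\le i+\lambda_i-1$. $C^{\mathrm{shift}}(\lambda)$ is the set of corners $c_t$ for $1\le t\le\ell(\lambda)-1$ with $\lambda_t-\lambda_{t+1}\ge2$, where $c_t$ occurs at the lattice point $(t,t+\lambda_{t+1})$ (box $[i,j]$ having southeast corner $(i,j)$); $C^{\mathrm{shift}}_{ij}(\lambda)$ consists of those $c_t$ with $t\ge i$ and $t+\lambda_{t+1}\ge j$. *)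

(* Defs.v *)
From mathcomp Require Import all_boot all_order all_algebra.
Set Implicit Arguments. Unset Strict Implicit. Unset Printing Implicit Defensive.

(* Partitions are represented as seq nat (parts listed in order). Parts are
   1-indexed in the paper: part(lam, i) = lambda_i, and = 0 beyond the length. *)
Definition part (lam : seq nat) (i : nat) : nat := nth 0 lam i.-1.

Definition is_partition (lam : seq nat) : bool :=
  sorted (fun a b => b <= a) lam && all (fun x => 0 < x) lam.

Definition is_strict_partition (lam : seq nat) : bool :=
  sorted (fun a b => b < a) lam && all (fun x => 0 < x) lam.

Definition delta (n : nat) : seq nat := [seq n - i | i <- iota 0 n].

Definition rect (b a : nat) : seq nat := nseq a b.

Definition padd (s t : seq nat) : seq nat :=
  mkseq (fun i => nth 0 s i + nth 0 t i) (maxn (size s) (size t)).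

Definition balanced (nu : seq nat) (k : nat) : Prop :=
  is_partition nu /\
  (if k == 0 then nu = [::] else size nu = k /\ part nu 1 = k) /\
  (forall i, 1 <= i <= k.-1 -> part nu i > part nu i.+1 -> i + part nu i.+1 = k).

Definition shifted_balanced_type1 (lam : seq nat) : Prop :=
  exists n k nu, k < n /\ balanced nu k /\ lam = padd (delta n) nu.

Definition shifted_balanced_type2 (lam : seq nat) : Prop :=
  exists n k nu, k < n /\ balanced nu k /\
    lam = padd (padd (delta n) nu) (rect (n.-1 - k) n).

Definition boxes (lam : seq nat) : seq (nat * nat) :=
  flatten [seq [seq (i, j) | j <- iota i (part lam i)] | i <- iota 1 (size lam)].

(* outward corners, indexed by t: 1 <= t <= l(lam)-1 with lam_t - lam_{t+1} >= 2;
   corner c_t sits at lattice point (t, t + lam_{t+1}). *)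
Definition corner_idx (lam : seq nat) : seq nat :=
  [seq t <- iota 1 (size lam).-1 | part lam t.+1 + 2 <= part lam t].

Definition in_Cij (lam : seq nat) (t i j : nat) : bool :=
  (i <= t) && (j <= t + part lam t.+1).

(* Main.v *)
Require Import Defs.
From mathcomp Require Import all_boot all_order all_algebra zify ring.
Import GRing.Theory Num.Theory.
Local Open Scope ring_scope.

Lemma mem_boxes (lam : seq nat) (i j : nat) :
  ((i, j) \in boxes lam) = [&& (1 <= i)%N, (i <= size lam)%N, (i <= j)%N & (j < i + part lam i)%N].
Proof.
apply/idP/idP.
- rewrite /boxes => /flattenP [s /mapP [i' Hi' ->]] /mapP [j' Hj' [-> ->]].
  move: Hi' Hj'; rewrite !mem_iota => H1 H2. lia.
- move=> H; rewrite /boxes; apply/flattenP.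
  exists [seq (i, j0) | j0 <- iota i (part lam i)].
  + apply/mapP; exists i => //; rewrite mem_iota; lia.
  + apply/mapP; exists j => //; rewrite mem_iota; lia.
Qed.

Lemma uniq_boxes (lam : seq nat) : uniq (boxes lam).
Proof.
rewrite /boxes.
elim: (size lam) 1%N => [|m IH] st //=.
rewrite cat_uniq IH andbT.
rewrite map_inj_uniq ?iota_uniq //=; last by move=> x y [].
apply/hasPn => b /flattenP [s /mapP [i' Hi' ->]] /mapP [j' _ ->].
apply/mapP => [[j'' _ [E _]]]. move: Hi'; rewrite mem_iota. lia.
Qed.

Lemma sum_cond (B s : seq (nat * nat)) (P Q : pred (nat * nat)) (c : int) :
  uniq B -> uniq s -> (forall b, (b \in B) && Q b = (b \in s)) ->
  \sum_(b <- B | P b) (if Q b then c else 0) = c *+ count P s.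
Proof.
move=> uB us H.
rewrite -big_mkcondr.
rewrite (eq_bigl (fun b => Q b && P b)); last by move=> b; rewrite andbC.
rewrite -big_filter_cond.
rewrite (perm_big s); last first.
  apply: uniq_perm; first exact: filter_uniq.
  - exact: us.
  - by move=> b; rewrite mem_filter andbC H.
rewrite big_const_seq.
elim: s {us H} => [|x s IH] //=.
by case: (P x); rewrite /= IH ?mulrS.
Qed.
Lemma count_le (t m L : nat) : count (fun i => (i <= t)%N) (iota m L) = minn L (t.+1 - m).
Proof. elim: L m => [|L IH] m /=; first by rewrite min0n. rewrite IH. case: leqP => H; lia. Qed.

Lemma count_ge (t m L : nat) : count (fun i => (t <= i)%N) (iota m L) = (L - minn L (t - m))%N.
Proof. elim: L m => [|L IH] m /=; first by []. rewrite IH. case: leqP => H; lia. Qed.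

Lemma count_eq (t m L : nat) : count (fun i => i == t) (iota m L) = (m <= t < m + L)%N.
Proof. elim: L m => [|L IH] m /=; first by lia. rewrite IH. case: eqP => H; lia. Qed.

Lemma strict_pos (lam : seq nat) : is_strict_partition lam ->
  forall i, (i < size lam)%N -> (0 < nth 0 lam i)%N.
Proof. case/andP=> _ /allP H i Hi. apply: H. exact: mem_nth. Qed.

Lemma strict_step (lam : seq nat) : is_strict_partition lam ->
  forall i, (i.+1 < size lam)%N -> (nth 0 lam i.+1 < nth 0 lam i)%N.
Proof.
case/andP=> S _ i Hi.
have tr : transitive (fun a b : nat => (b < a)%N) by move=> b a c H1 H2; exact: ltn_trans H2 H1.
have := sorted_ltn_nth tr 0 S. move=> /(_ i i.+1). apply; rewrite ?inE //; lia.
Qed.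

Lemma strict_mono (lam : seq nat) : is_strict_partition lam ->
  forall i j, (i <= j < size lam)%N -> (nth 0 lam j + j <= nth 0 lam i + i)%N.
Proof.
move=> Hs i; elim=> [|j IH] H; first by have -> : i = 0%N by lia.
case: (ltngtP i j.+1) => Hij; [|lia|by rewrite Hij].
have := IH ltac:(lia). have := @strict_step lam Hs j ltac:(lia). lia.
Qed.

Definition rr (n K : nat) (a : int) (i j : nat) : int :=
  (if i == j then a else 0) + (if (j == i.+1) && (i < n)%N then 2 - a else 0)
  + (if (i == 1%N) && (n < j)%N then 2 else 0) + (if (i == 1%N) && (j == 1%N) then - (K%:Z *+ 2) else 0).

Lemma sum_rr (lam : seq nat) (n K : nat) (a : int) (P : pred (nat * nat)) :
  size lam = n -> (0 < n)%N ->
  (forall i, (1 <= i <= n)%N -> (1 <= part lam i)%N) ->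
  (forall i, (1 <= i < n)%N -> (2 <= part lam i)%N) ->
  part lam 1 = (n + K)%N ->
  \sum_(b <- boxes lam | P b) rr n K a b.1 b.2 =
    a *+ count (fun i => P (i, i)) (iota 1 n)
  + (2 - a) *+ count (fun i => P (i, i.+1)) (iota 1 n.-1)
  + 2 *+ count (fun j => P (1%N, j)) (iota n.+1 K)
  - (K%:Z *+ 2) *+ P (1%N, 1%N).
Proof.
move=> Hn n0 Hp H2 HK.
rewrite /rr !big_split /=.
rewrite (@sum_cond _ [seq (i, i) | i <- iota 1 n] P (fun b => b.1 == b.2) a) ?uniq_boxes; last 2 first.
- by rewrite map_inj_uniq ?iota_uniq // => x y [].
- case=> i j /=; rewrite mem_boxes; apply/idP/idP.
  + case/andP=> H /eqP E; subst j; apply/mapP; exists i => //; rewrite mem_iota; lia.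
  + case/mapP=> k; rewrite mem_iota => Hk [-> ->]; rewrite eqxx andbT Hn.
    have := Hp k ltac:(lia); lia.
rewrite (@sum_cond _ [seq (i, i.+1) | i <- iota 1 n.-1] P (fun b => (b.2 == b.1.+1) && (b.1 < n)%N) (2 - a)) ?uniq_boxes; last 2 first.
- by rewrite map_inj_uniq ?iota_uniq // => x y [].
- case=> i j /=; rewrite mem_boxes; apply/idP/idP.
  + case/and3P=> H /eqP E H'; subst j; apply/mapP; exists i => //; rewrite mem_iota; lia.
  + case/mapP=> k; rewrite mem_iota => Hk [-> ->]; rewrite eqxx Hn.
    have := H2 k ltac:(lia); lia.
rewrite (@sum_cond _ [seq (1%N, j) | j <- iota n.+1 K] P (fun b => (b.1 == 1%N) && (n < b.2)%N) 2) ?uniq_boxes; last 2 first.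
- by rewrite map_inj_uniq ?iota_uniq // => x y [].
- case=> i j /=; rewrite mem_boxes; apply/idP/idP.
  + case/and3P=> H /eqP E H'; subst i; apply/mapP; exists j => //; rewrite mem_iota; move: H; rewrite HK; lia.
  + case/mapP=> k; rewrite mem_iota => Hk [-> ->]; rewrite eqxx Hn HK. lia.
rewrite (@sum_cond _ [:: (1%N, 1%N)] P (fun b => (b.1 == 1%N) && (b.2 == 1%N)) (- (K%:Z *+ 2))) ?uniq_boxes; last 2 first.
- by [].
- case=> i j /=; rewrite mem_boxes inE; apply/idP/idP.
  + case/and3P=> H /eqP E /eqP E'; subst i j; by [].
  + case/eqP=> -> ->; rewrite Hn HK /=. lia.
rewrite !count_map /= mulNrn.
case: (P (1%N, 1%N)) => /=; rewrite ?addn0 //.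
all: done.
Qed.

Lemma abstract_main (lam : seq nat) (n K : nat) (a : int) :
  is_strict_partition lam -> size lam = n -> (0 < n)%N -> part lam 1 = (n + K)%N ->
  a = 3 - n%:Z + K%:Z ->
  ((1 < part lam n)%N -> a = 2) ->
  (forall t, t \in corner_idx lam -> (t + part lam t.+1 = n + K - t)%N) ->
  exists r : nat -> nat -> int,
    (forall b, b \in boxes lam -> b.1 != b.2 ->
       \sum_(b' <- boxes lam | b'.2 == b.2) r b'.1 b'.2 = 2 /\
       \sum_(b' <- boxes lam | b'.1 == b.1) r b'.1 b'.2 = 2) /\
    (forall b, b \in boxes lam -> b.1 == b.2 ->
       \sum_(b' <- boxes lam | (b'.1 <= b.1)%N && (b'.2 <= b.1)%N) r b'.1 b'.2
     + \sum_(b' <- boxes lam | (b.1 <= b'.1)%N && (b.1 <= b'.2)%N) r b'.1 b'.2 = 4) /\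
    (forall t, t \in corner_idx lam ->
       \sum_(b' <- boxes lam | in_Cij lam t b'.1 b'.2) r b'.1 b'.2 = 0).
Proof.
move=> Hs Hn n0 HK Ha H3 H4.
have Hp : forall i, (1 <= i <= n)%N -> (1 <= part lam i)%N.
  move=> i Hi; rewrite /part; have := @strict_pos lam Hs i.-1; lia.
have H2 : forall i, (1 <= i < n)%N -> (2 <= part lam i)%N.
  move=> i Hi; rewrite /part; have := @strict_step lam Hs i.-1 ltac:(lia).
  have := @strict_pos lam Hs i.-1.+1. have -> : i.-1.+1 = i by lia. lia.
have Hmono : forall i, (1 <= i <= n)%N -> (i + part lam i <= 1 + part lam 1)%N.
  move=> i Hi; rewrite /part; have := @strict_mono lam Hs 0 i.-1 ltac:(lia). simpl. lia.
have HS1 : forall i, (1 <= i <= n)%N -> (n + 1 <= i + part lam i)%N.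
  move=> i Hi; rewrite /part; have := @strict_mono lam Hs i.-1 n.-1 ltac:(lia).
  have := @strict_pos lam Hs n.-1. lia.
have SR := fun P => @sum_rr lam n K a P Hn n0 Hp H2 HK.
exists (rr n K a).
split; [|split].
- case=> i0 j; rewrite mem_boxes Hn /= => Hb /eqP Hne. split.
  + rewrite SR /=.
    rewrite count_eq.
    rewrite (@eq_count _ _ (fun i => i == j.-1)); last by move=> i /=; lia.
    rewrite !count_eq.
    have -> : (1 == j) = false by lia.
    case: (boolP (j <= n)%N) => Hj.
    * have -> : (1 <= j < 1 + n)%N = true by lia.
      have -> : (1 <= j.-1 < 1 + n.-1)%N = true by lia.
      have -> : (n < j < n.+1 + K)%N = false by lia.
      rewrite /=. ring.
    * have -> : (1 <= j < 1 + n)%N = false by lia.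
      have -> : (1 <= j.-1 < 1 + n.-1)%N = false by lia.
      have -> : (n < j < n.+1 + K)%N = true by have := Hmono i0 ltac:(lia); lia.
      rewrite /=. ring.
  + rewrite SR /=.
    rewrite !count_eq.
    have -> : (1 <= i0 < 1 + n)%N = true by lia.
    case: (eqVneq i0 1%N) => [E|/eqP E].
    * subst i0. rewrite (@eq_count _ _ predT) // count_predT size_iota /=.
      case: (boolP (1 < n)%N) => Hn1.
      - have -> : (1 < 1 + n.-1)%N = true by lia. rewrite /=. ring.
      - have -> : (1 < 1 + n.-1)%N = false by lia.
        have En : n = 1%N by lia. rewrite En in H3.
        rewrite H3 /=; [ring | lia].
    * rewrite (@eq_count _ _ pred0); last by move=> x /=; apply/negbTE/eqP; lia.
      rewrite count_pred0.
      case: (boolP (i0 < n)%N) => Hn1.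
      - have -> : (1 <= i0 < 1 + n.-1)%N = true by lia. rewrite /=. ring.
      - have -> : (1 <= i0 < 1 + n.-1)%N = false by lia.
        have En : i0 = n by lia. subst i0.
        rewrite H3 /=; [ring | lia].
- case=> i0 j; rewrite mem_boxes Hn /= => Hb /eqP E; subst j.
  have Hpi := Hp i0 ltac:(lia).
  have [p [q [Ep Eq]]] : exists p q, i0 = p.+1 /\ n = (i0 + q)%N by exists i0.-1, (n - i0)%N; lia.
  have cl : forall (P : pred nat) t m L, (forall i, P i = (i <= t)%N) -> count P (iota m L) = minn L (t.+1 - m).
    by move=> P t m L HP; rewrite (eq_count HP) count_le.
  have cg : forall (P : pred nat) t m L, (forall i, P i = (t <= i)%N) -> count P (iota m L) = (L - minn L (t - m))%N.
    by move=> P t m L HP; rewrite (eq_count HP) count_ge.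
  rewrite !SR /=.
  rewrite (cl _ i0 1%N n); last by move=> i; lia.
  rewrite (cl _ i0.-1 1%N n.-1); last by move=> i; lia.
  rewrite (cl _ i0 n.+1 K); last by move=> i; lia.
  rewrite (cg _ i0 1%N n); last by move=> i; lia.
  rewrite (cg _ i0 1%N n.-1); last by move=> i; lia.
  have -> : minn n (i0.+1 - 1) = p.+1 by lia.
  have -> : minn n.-1 (i0.-1.+1 - 1) = p by lia.
  have -> : minn K (i0.+1 - n.+1) = 0%N by lia.
  have -> : (0 < i0)%N && (0 < i0)%N = true by lia.
  have -> : (n - minn n (i0 - 1))%N = q.+1 by lia.
  have -> : (n.-1 - minn n.-1 (i0 - 1))%N = q by lia.
  case: (boolP (i0 <= 1)%N) => Hi1.
  + rewrite (cg _ 1%N n.+1 K); last by move=> i; lia.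
    have -> : minn K (1 - n.+1) = 0%N by lia.
    have Ep0 : p = 0%N by lia.
    rewrite Ha Eq Ep Ep0 /= subn0. ring.
  + rewrite (@eq_count _ _ pred0) ?count_pred0; last by move=> i /=; lia.
    rewrite Ha Eq Ep /=. ring.
- move=> t Ht.
  have Em := H4 t Ht.
  move: Ht; rewrite /corner_idx mem_filter mem_iota Hn => /andP [Hc Ht].
  have HS := HS1 t.+1 ltac:(lia).
  have [u Eu] : exists u, K = (t + u)%N by exists (K - t)%N; lia.
  have cl : forall (P : pred nat) t m L, (forall i, P i = (i <= t)%N) -> count P (iota m L) = minn L (t.+1 - m).
    by move=> P t' m L HP; rewrite (eq_count HP) count_le.
  rewrite SR /in_Cij /=.
  rewrite (cl _ t 1%N n); last by move=> i; lia.
  rewrite (cl _ t 1%N n.-1); last by move=> i; lia.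
  rewrite (cl _ (t + part lam t.+1)%N n.+1 K); last by move=> i; lia.
  have -> : minn n (t.+1 - 1) = t by lia.
  have -> : minn n.-1 (t.+1 - 1) = t by lia.
  have -> : minn K ((t + part lam t.+1).+1 - n.+1) = u by lia.
  have -> : (0 < t)%N && (0 < t + part lam t.+1)%N = true by lia.
  rewrite Eu /=. ring.
Qed.

Lemma part_big (s : seq nat) i : (size s < i)%N -> part s i = 0%N.
Proof. move=> H; rewrite /part nth_default //; lia. Qed.

Lemma bal_size nu k : balanced nu k -> size nu = k /\ part nu 1 = k.
Proof.
case=> _ [H _]; case: eqP H => [-> -> //|_ [-> ->] //].
Qed.

Lemma bal_corner nu k t : balanced nu k -> (1 <= t)%N -> (part nu t.+1 < part nu t)%N ->
  (t + part nu t.+1)%N = k.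
Proof.
move=> Hb Ht Hlt.
have [Hs H1] := @bal_size nu k Hb.
case: Hb => _ [_ Hc].
have Htk : (t <= k)%N.
  case: (leqP t k) => // Hkt. have H := @part_big nu t ltac:(lia). rewrite H in Hlt. by [].
case: (ltnP t k) => Htk'.
- apply: Hc => //; lia.
- have -> : t = k by lia. rewrite (@part_big nu k.+1); lia.
Qed.

Lemma nth_delta n i : (i < n)%N -> nth 0 (delta n) i = (n - i)%N.
Proof. move=> H; rewrite /delta (nth_map 0) ?size_iota // nth_iota //. Qed.

Lemma size_padd s t : size (padd s t) = maxn (size s) (size t).
Proof. by rewrite /padd size_mkseq. Qed.

Lemma nth_padd s t i : (i < maxn (size s) (size t))%N -> nth 0 (padd s t) i = (nth 0 s i + nth 0 t i)%N.
Proof. move=> H; by rewrite /padd nth_mkseq. Qed.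

Theorem lemma5p5 (lam : seq nat) :
  is_strict_partition lam ->
  shifted_balanced_type1 lam \/ shifted_balanced_type2 lam ->
  exists r : nat -> nat -> int,
    (forall b, b \in boxes lam -> b.1 != b.2 ->
       \sum_(b' <- boxes lam | b'.2 == b.2) r b'.1 b'.2 = 2 /\
       \sum_(b' <- boxes lam | b'.1 == b.1) r b'.1 b'.2 = 2) /\
    (forall b, b \in boxes lam -> b.1 == b.2 ->
       \sum_(b' <- boxes lam | (b'.1 <= b.1)%N && (b'.2 <= b.1)%N) r b'.1 b'.2
     + \sum_(b' <- boxes lam | (b.1 <= b'.1)%N && (b.1 <= b'.2)%N) r b'.1 b'.2 = 4) /\
    (forall t, t \in corner_idx lam ->
       \sum_(b' <- boxes lam | in_Cij lam t b'.1 b'.2) r b'.1 b'.2 = 0).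
Proof.
move=> Hs [[n [k [nu [Hkn [Hb Elam]]]]] | [n [k [nu [Hkn [Hb Elam]]]]]].
- have [Hsz H1] := @bal_size nu k Hb.
  have Hsd : size (delta n) = n by rewrite /delta size_map size_iota.
  have Hn : size lam = n by rewrite Elam size_padd Hsd Hsz; lia.
  have Hpart : forall i, (1 <= i <= n)%N -> part lam i = (n - i.-1 + part nu i)%N.
    move=> i Hi; rewrite /part Elam nth_padd ?Hsd ?Hsz; last lia.
    by rewrite nth_delta; last lia.
  apply: (@abstract_main lam n k (3 - n%:Z + k%:Z) Hs Hn) => //.
  + lia.
  + rewrite Hpart; [rewrite H1; lia | lia].
  + rewrite Hpart; last lia. rewrite part_big; [lia | lia].
  + move=> t; rewrite /corner_idx mem_filter mem_iota Hn => /andP [Hc Ht].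
    move: Hc; rewrite !Hpart; try lia. move=> Hc.
    have := @bal_corner nu k t Hb ltac:(lia) ltac:(lia). lia.
- have [Hsz H1] := @bal_size nu k Hb.
  have Hsd : size (delta n) = n by rewrite /delta size_map size_iota.
  have Hsp : size (padd (delta n) nu) = n by rewrite size_padd Hsd Hsz; lia.
  have Hn : size lam = n by rewrite Elam size_padd Hsp /rect size_nseq; lia.
  have Hpart : forall i, (1 <= i <= n)%N -> part lam i = (n - i.-1 + part nu i + (n.-1 - k))%N.
    move=> i Hi; rewrite /part Elam nth_padd ?Hsp /rect ?size_nseq; last lia.
    rewrite nth_padd ?Hsd ?Hsz; last lia.
    rewrite nth_delta; last lia. by rewrite nth_nseq; case: ifP => //; lia.
  apply: (@abstract_main lam n n.-1 (3 - n%:Z + (n.-1)%:Z) Hs Hn) => //.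
  + lia.
  + rewrite Hpart; [rewrite H1; lia | lia].
  + move=> _; lia.
  + move=> t; rewrite /corner_idx mem_filter mem_iota Hn => /andP [Hc Ht].
    move: Hc; rewrite !Hpart; try lia. move=> Hc.
    have := @bal_corner nu k t Hb ltac:(lia) ltac:(lia). lia.
Qed.
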